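(* Let $Q$ be an ice fork with point of return $r$, let $j\neq r$ be a mutable vertex, and let $k\ne j$ be another mutable vertex. If $k$ is red or green in $Q$, then $k$ is red or green in $\mu_j(Q)$.
   Context: A quiver is a finite directed multigraph with no loops and no oriented 2-cycles, whose vertex set is partitioned into mutable and frozen vertices; arrows between two frozen vertices are ignored. $b_{ik}$ = number of arrows $i\to k$ minus number of arrows $k\to i$; $Q|_S$ is the induced subquiver on $S$; $[n]$ is the set of mutable vertices. Mutation $\mu_j$ at mutable $j$: for each path $i\to j\to k$ add $b_{ij}b_{jk}$ arrows $i\to k$, reverse all arrows at $j$, cancel 2-cycles. Abundant: at least 2 arrows between every pair of vertices at least one of which is mutable. $F^+(r)=\{i: r\to i\}$, $F^-(r)=\{j:j\to r\}$. A fork is an abundant non-acyclic quiver with at most one frozen vertex and a vertex $r$ (point of return) such that $b_{ij}>b_{ri}$ and $b_{ij}>b_{jr}$ for all $i\in F^+(r),j\in F^-(r)$, and the subquivers induced on $F^+(r)$ and $F^-(r)$ are acyclic. An ice fork with point of return $r$ is a quiver with mutable vertices $[n]$ and frozen vertices $u_1,\dots,u_m$ ($m\ge1$) such that each $Q|_{[n]\cup\{u_i\}}$ is a fork with point of return $r$. A mutable vertex adjacent to at least one frozen vertex is red (resp. green) if all arrows between it and frozen vertices point towards (resp. away from) it. *)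

(* Defs.v *)
From mathcomp Require Import all_boot all_order all_algebra.
Set Implicit Arguments. Unset Strict Implicit. Unset Printing Implicit Defensive.
Import Order.TTheory GRing.Theory Num.Theory.
Local Open Scope ring_scope.

(* Vertices of a quiver with n mutable vertices ([n] = 'I_n, as inl)
   and m frozen vertices u_1..u_m (as inr). *)
Definition vert (n m : nat) : finType := ('I_n + 'I_m)%type.

Definition is_mutable {n m} (v : vert n m) : bool :=
  if v is inl _ then true else false.
Definition is_frozen {n m} (v : vert n m) : bool := ~~ is_mutable v.

(* A quiver is encoded by its exchange matrix b : b x y = #(x -> y) - #(y -> x).
   No loops / no 2-cycles <=> b is skew_sym-symmetric. *)
Definition bmat (n m : nat) := vert n m -> vert n m -> int.
Definition skew_sym {n m} (b : bmat n m) : Prop := forall x y, b x y = - b y x.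

Definition arrow {n m} (b : bmat n m) (x y : vert n m) : bool :=
  (0 < b x y) && ~~ (is_frozen x && is_frozen y).

Definition pos (z : int) : int := if 0 < z then z else 0.

Definition mutate {n m} (j : 'I_n) (b : bmat n m) : bmat n m :=
  fun x y =>
    if (x == inl j) || (y == inl j) then - b x y
    else b x y + pos (b x (inl j)) * pos (b (inl j) y)
               - pos (b y (inl j)) * pos (b (inl j) x).

Definition has_cycle_on {n m} (b : bmat n m) (S : pred (vert n m)) : Prop :=
  exists (x : vert n m) (s : seq (vert n m)),
    [/\ x \in S, all (fun v => v \in S) s, s != [::],
        path (arrow b) x s & last x s == x].

Definition acyclic_on {n m} (b : bmat n m) (S : pred (vert n m)) : Prop :=
  ~ has_cycle_on b S.

Definition abundant_on {n m} (b : bmat n m) (S : pred (vert n m)) : Prop :=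
  forall x y, x \in S -> y \in S -> x != y -> ~~ (is_frozen x && is_frozen y) ->
    2 <= `|b x y|.

Definition fork_on {n m} (b : bmat n m) (S : pred (vert n m)) (r : vert n m) : Prop :=
  r \in S /\
  (forall u w, u \in S -> w \in S -> is_frozen u -> is_frozen w -> u = w) /\
  abundant_on b S /\
  has_cycle_on b S /\
  acyclic_on b [pred i | (i \in S) && arrow b r i] /\
  acyclic_on b [pred j | (j \in S) && arrow b j r] /\
  (forall i j, i \in S -> j \in S -> arrow b r i -> arrow b j r ->
         b r i < b i j /\ b j r < b i j).

Definition ice_fork {n m} (b : bmat n m) (r : 'I_n) : Prop :=
  (0 < m)%N /\
  forall u : 'I_m,
    fork_on b (fun v => is_mutable v || (v == inr u)) (inl r).

Definition red {n m} (b : bmat n m) (k : 'I_n) : Prop :=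
  (exists u : 'I_m, b (inr u) (inl k) != 0) /\
  (forall u : 'I_m, ~~ arrow b (inl k) (inr u)).

Definition green {n m} (b : bmat n m) (k : 'I_n) : Prop :=
  (exists u : 'I_m, b (inr u) (inl k) != 0) /\
  (forall u : 'I_m, ~~ arrow b (inr u) (inl k)).

(* Main.v *)
Require Import Defs.
From mathcomp Require Import all_boot all_order all_algebra.
From mathcomp Require Import zify.
Set Implicit Arguments. Unset Strict Implicit. Unset Printing Implicit Defensive.
Import Order.TTheory GRing.Theory Num.Theory.
Local Open Scope ring_scope.

Section H.
Variables (n m : nat) (b : bmat n m) (S : pred (vert n m)) (r0 : vert n m).
Hypotheses (sk : skew_sym b) (F : fork_on b S r0) (mr : is_mutable r0).

Lemma arrowE (x y : vert n m) : ~~ (is_frozen x && is_frozen y) ->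
  arrow b x y = (0 < b x y).
Proof. by rewrite /arrow => ->; rewrite andbT. Qed.

Lemma abund x y : x \in S -> y \in S -> x != y -> ~~ (is_frozen x && is_frozen y) ->
  2 <= `|b x y|.
Proof. by case: F => _ [_ [A _]]; apply: A. Qed.

Lemma side v : v \in S -> v != r0 -> (0 < b r0 v) \/ (0 < b v r0).
Proof.
move=> vS vr. have r0S : r0 \in S by case: F.
have h : r0 != v by rewrite eq_sym.
have hf : ~~ (is_frozen r0 && is_frozen v) by rewrite /is_frozen mr.
move: (abund r0S vS h hf). rewrite (sk v r0). lia.
Qed.

Lemma noA a c : a \in S -> c \in S -> 0 < b r0 c -> 0 < b a r0 -> 0 < b a c ->
  ~~ (is_frozen a && is_frozen c) -> False.
Proof.
move=> aS cS h1 h2 h3 hf.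
case: F => _ [_ [_ [_ [_ [_ I]]]]].
have fr : forall v : vert n m, ~~ (is_frozen r0 && is_frozen v) by move=> v; rewrite /is_frozen mr.
have fr' : ~~ (is_frozen a && is_frozen r0) by rewrite /is_frozen mr /= andbF.
have [I1 _] := I c a cS aS ltac:(by rewrite arrowE) ltac:(by rewrite arrowE).
move: I1; rewrite (sk c a). lia.
Qed.

Lemma no3 x y z : x \in S -> y \in S -> z \in S ->
  arrow b x y -> arrow b y z -> arrow b z x -> x != r0 -> y != r0 -> z != r0 -> False.
Proof.
move=> xS yS zS axy ayz azx xr yr zr.
have fr : forall v : vert n m, ~~ (is_frozen r0 && is_frozen v) by move=> v; rewrite /is_frozen mr.
have fr' : forall v : vert n m, ~~ (is_frozen v && is_frozen r0) by move=> v; rewrite andbC.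
have posxy : forall p q : vert n m, arrow b p q -> 0 < b p q by move=> p q /andP[].
have nfxy : forall p q : vert n m, arrow b p q -> ~~ (is_frozen p && is_frozen q) by move=> p q /andP[].
case: F => _ [_ [_ [_ [Ap [Am _]]]]].
case: (side xS xr) => hx; case: (side yS yr) => hy; case: (side zS zr) => hz.
- apply: Ap; exists x, [:: y; z; x]; split => //=.
  + by rewrite !inE xS (arrowE (fr x)) hx.
  + by rewrite !inE yS zS xS (arrowE (fr x)) (arrowE (fr y)) (arrowE (fr z)) hx hy hz.
  + by rewrite axy ayz azx.
- exact: (noA zS xS hx hz (posxy _ _ azx) (nfxy _ _ azx)).
- exact: (noA yS zS hz hy (posxy _ _ ayz) (nfxy _ _ ayz)).
- exact: (noA zS xS hx hz (posxy _ _ azx) (nfxy _ _ azx)).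
- exact: (noA xS yS hy hx (posxy _ _ axy) (nfxy _ _ axy)).
- exact: (noA xS yS hy hx (posxy _ _ axy) (nfxy _ _ axy)).
- exact: (noA yS zS hz hy (posxy _ _ ayz) (nfxy _ _ ayz)).
- apply: Am; exists x, [:: y; z; x]; split => //=.
  + by rewrite !inE xS (arrowE (fr' x)) hx.
  + by rewrite !inE yS zS xS (arrowE (fr' x)) (arrowE (fr' y)) (arrowE (fr' z)) hx hy hz.
  + by rewrite axy ayz azx.
Qed.

Lemma forkI i j : i \in S -> j \in S -> 0 < b r0 i -> 0 < b j r0 ->
  ~~ (is_frozen i && is_frozen j) -> b r0 i < b i j /\ b j r0 < b i j.
Proof.
move=> iS jS h1 h2 _.
have fr : forall v : vert n m, ~~ (is_frozen r0 && is_frozen v) by move=> v; rewrite /is_frozen mr.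
case: F => _ [_ [_ [_ [_ [_ I]]]]].
apply: I => //; rewrite arrowE //; by rewrite andbC.
Qed.
End H.

Lemma posE (z : int) : 0 < z -> pos z = z.
Proof. by rewrite /pos => ->. Qed.
Lemma pos0 (z : int) : z <= 0 -> pos z = 0.
Proof. rewrite /pos; case: ifP => //; lia. Qed.
Lemma pos_ge0 (z : int) : 0 <= pos z.
Proof. rewrite /pos; case: ifP => //; lia. Qed.

Lemma mutate_skew n m (j : 'I_n) (b : bmat n m) : skew_sym b -> skew_sym (mutate j b).
Proof.
move=> sk x y; rewrite /mutate orbC.
case: ifP => _; first by rewrite (sk x y).
rewrite (sk x y); lia.
Qed.

Theorem mainTheorem6 (n m : nat) (b : bmat n m) (r j k : 'I_n) :
  skew_sym b -> ice_fork b r -> j != r -> k != j ->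
  red b k \/ green b k ->
  red (mutate j b) k \/ green (mutate j b) k.
Proof.
move=> sk [m0 IF] jr kj Hrg.
set b' := mutate j b.
have sk' : skew_sym b' by exact: mutate_skew.
have mE : forall u : 'I_m, b' (inr u) (inl k) =
   b (inr u) (inl k) + pos (b (inr u) (inl j)) * pos (b (inl j) (inl k))
   - pos (b (inl k) (inl j)) * pos (b (inl j) (inr u)).
  move=> u; have e : (inl k == inl j :> vert n m) = false by apply/negP => /eqP [] /eqP; rewrite (negbTE kj).
  by rewrite /b' /mutate /= e.
clearbody b'.
have toRed : (forall u : 'I_m, 0 < b' (inr u) (inl k)) -> red b' k.
  move=> H; split; first by exists (Ordinal m0); apply/negP => /eqP e; have := H (Ordinal m0); rewrite e.
  move=> u; rewrite /arrow; apply/negP => /andP[h _]; move: h; rewrite sk'.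
  move: (H u); move: (b' (inr u) (inl k)) => t; lia.
have toGreen : (forall u : 'I_m, b' (inr u) (inl k) < 0) -> green b' k.
  move=> H; split; first by exists (Ordinal m0); apply/negP => /eqP e; have := H (Ordinal m0); rewrite e.
  move=> u; rewrite /arrow; apply/negP => /andP[h _]; move: h.
  move: (H u); move: (b' (inr u) (inl k)) => t; lia.
pose S (u : 'I_m) := fun v : vert n m => is_mutable v || (v == inr u).
have inS : forall (u : 'I_m) (x : 'I_n), (inl x : vert n m) \in S u by [].
have uS : forall u : 'I_m, (inr u : vert n m) \in S u by move=> u; rewrite unfold_in /S eqxx.
have mr : is_mutable (inl r : vert n m) by [].
have ur : forall u : 'I_m, (inr u : vert n m) != inl r by [].
have jr' : (inl j : vert n m) != inl r by apply/negP => /eqP [] /eqP; rewrite (negbTE jr).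
have nf1 : forall (u : 'I_m) (x : 'I_n), ~~ (is_frozen (inr u : vert n m) && is_frozen (inl x : vert n m)).
  by [].
have nf2 : forall (x : 'I_n) (u : 'I_m), ~~ (is_frozen (inl x : vert n m) && is_frozen (inr u : vert n m)) by [].
have nf3 : forall x y : 'I_n, ~~ (is_frozen (inl x : vert n m) && is_frozen (inl y : vert n m)) by [].
have pp : forall x y : int, 0 <= pos x * pos y.
  by move=> x y; apply: mulr_ge0; apply: pos_ge0.
have ab : forall (u : 'I_m) (x y : vert n m), x \in S u -> y \in S u -> x != y ->
    ~~ (is_frozen x && is_frozen y) -> 2 <= `|b x y|.
  move=> u x y xS yS; exact: (abund (IF u) xS yS).
have redb : red b k -> forall u : 'I_m, 2 <= b (inr u) (inl k).
  move=> [_ H] u; have := H u; rewrite arrowE // (sk (inl k)) => h.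
  have := ab u _ _ (uS u) (inS u k) isT (nf1 u k).
  move: h; move: (b (inr u) (inl k)) => t; lia.
have greenb : green b k -> forall u : 'I_m, b (inr u) (inl k) <= -2.
  move=> [_ H] u; have := H u; rewrite arrowE // => h.
  have := ab u _ _ (uS u) (inS u k) isT (nf1 u k).
  move: h; move: (b (inr u) (inl k)) => t; lia.
have u0 : 'I_m := Ordinal m0.
case: (eqVneq k r) => [ekr | kr].
- subst k.
  have sR := side sk (IF u0) mr (inS u0 j) jr'.
  have rj' : (inl r : vert n m) != inl j by rewrite eq_sym.
  have aRJ := ab u0 _ _ (inS u0 r) (inS u0 j) rj' (nf3 r j).
  case: Hrg => [/redb hb | /greenb hb]; case: sR => hs.
  + right; apply: toGreen => u; rewrite mE.
    have hU := hb u.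
    have aUJ := ab u _ _ (uS u) (inS u j) isT (nf1 u j).
    have hJU : 0 < b (inl j) (inr u).
      rewrite (sk (inl j)); case: (leP (b (inr u) (inl j)) 0) => h.
        move: aUJ h; move: (b (inr u) (inl j)) => t; lia.
      exfalso; apply: (noA sk (IF u) mr (uS u) (inS u j) hs _ h (nf1 u j)).
      move: hU; move: (b (inr u) (inl r)) => t; lia.
    have [f1 f2] := forkI (IF u) mr (inS u j) (uS u) hs ltac:(move: hU; move: (b (inr u) (inl r)) => t; lia) (nf2 j u).
    rewrite (@pos0 (b (inr u) (inl j))); last by move: hJU; rewrite (sk (inl j)); move: (b (inr u) (inl j)) => t; lia.
    rewrite (posE hs) (posE hJU).
    have aRJ' : 2 <= `|b (inl r) (inl j)| := aRJ.
    move: aRJ' hs f1 f2 hU; move: (b (inl r) (inl j)) (b (inl j) (inr u)) (b (inr u) (inl r)) => x y z.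
    rewrite mul0r; nia.
  + left; apply: toRed => u; rewrite mE.
    have hU := hb u.
    rewrite (@pos0 (b (inl r) (inl j))); last by move: hs; rewrite (sk (inl j)); move: (b (inl r) (inl j)) => t; lia.
    have := pp (b (inr u) (inl j)) (b (inl j) (inl r)).
    move: hU; move: (pos (b (inr u) (inl j)) * pos (b (inl j) (inl r))) (b (inr u) (inl r)) => x y.
    rewrite mul0r; lia.
  + right; apply: toGreen => u; rewrite mE.
    have hU := hb u.
    rewrite (@pos0 (b (inl j) (inl r))); last by move: hs; rewrite (sk (inl r)); move: (b (inl j) (inl r)) => t; lia.
    have := pp (b (inl r) (inl j)) (b (inl j) (inr u)).
    move: hU; move: (pos (b (inl r) (inl j)) * pos (b (inl j) (inr u))) (b (inr u) (inl r)) => x y.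
    rewrite mulr0; lia.
  + left; apply: toRed => u; rewrite mE.
    have hU := hb u.
    have hRU : 0 < b (inl r) (inr u).
      by rewrite (sk (inl r)); move: hU; move: (b (inr u) (inl r)) => t; lia.
    have aUJ := ab u _ _ (uS u) (inS u j) isT (nf1 u j).
    have hUJ : 0 < b (inr u) (inl j).
      case: (leP (b (inr u) (inl j)) 0) => h //.
      have h' : 0 < b (inl j) (inr u).
        rewrite (sk (inl j)); move: aUJ h; move: (b (inr u) (inl j)) => t; lia.
      by exfalso; apply: (noA sk (IF u) mr (inS u j) (uS u) hRU hs h' (nf2 j u)).
    have [f1 f2] := forkI (IF u) mr (uS u) (inS u j) hRU hs (nf1 u j).
    rewrite (@pos0 (b (inl r) (inl j))); last by move: hs; rewrite (sk (inl j)); move: (b (inl r) (inl j)) => t; lia.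
    rewrite (posE hUJ) (posE hs).
    have aRJ' : 2 <= `|b (inl r) (inl j)| := aRJ.
    rewrite (sk (inl r) (inl j)) in aRJ'.
    move: aRJ' hs f1 f2 hU; rewrite (sk (inr u) (inl r)).
    move: (b (inl j) (inl r)) (b (inr u) (inl j)) (b (inl r) (inr u)) => x y z.
    rewrite mul0r; nia.
- have kr' : (inl k : vert n m) != inl r by apply/negP => /eqP [] /eqP; rewrite (negbTE kr).
  case: Hrg => [/redb hb | /greenb hb].
  + left; apply: toRed => u; rewrite mE.
    have hU := hb u.
    have e : pos (b (inl k) (inl j)) * pos (b (inl j) (inr u)) = 0.
      case: (leP (b (inl k) (inl j)) 0) => h1; first by rewrite (pos0 h1) mul0r.
      case: (leP (b (inl j) (inr u)) 0) => h2; first by rewrite (pos0 h2) mulr0.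
      exfalso; apply: (no3 sk (IF u) mr (uS u) (inS u k) (inS u j) _ _ _ (ur u) kr' jr').
      * rewrite arrowE //; move: hU; move: (b (inr u) (inl k)) => t; lia.
      * by rewrite arrowE.
      * by rewrite arrowE.
    rewrite e; have := pp (b (inr u) (inl j)) (b (inl j) (inl k)).
    move: hU; move: (pos (b (inr u) (inl j)) * pos (b (inl j) (inl k))) (b (inr u) (inl k)) => x y.
    lia.
  + right; apply: toGreen => u; rewrite mE.
    have hU := hb u.
    have e : pos (b (inr u) (inl j)) * pos (b (inl j) (inl k)) = 0.
      case: (leP (b (inr u) (inl j)) 0) => h1; first by rewrite (pos0 h1) mul0r.
      case: (leP (b (inl j) (inl k)) 0) => h2; first by rewrite (pos0 h2) mulr0.
      exfalso; apply: (no3 sk (IF u) mr (uS u) (inS u j) (inS u k) _ _ _ (ur u) jr' kr').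
      * by rewrite arrowE.
      * by rewrite arrowE.
      * rewrite arrowE // (sk (inl k)); move: hU; move: (b (inr u) (inl k)) => t; lia.
    rewrite e; have := pp (b (inl k) (inl j)) (b (inl j) (inr u)).
    move: hU; move: (pos (b (inl k) (inl j)) * pos (b (inl j) (inr u))) (b (inr u) (inl k)) => x y.
    lia.
Qed.
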